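(* Let $n\ge 1$, let $L\subseteq\mathbb Z^n$ be a lattice, and let $(\cdot,\cdot)$ be an inner product on $\mathbb R^n$ for which the canonical basis $\vec e_1,\dots,\vec e_n$ is orthogonal (not necessarily orthonormal). Assume that $(L,(\cdot,\cdot))$ is a zonotopal lattice. Then a vector $\vec v\in L$ is an elementary vector of $L$ if and only if it is a strict Voronoi vector of $L$ (with respect to $(\cdot,\cdot)$).
   Context: A lattice $L\subseteq\mathbb Z^n$ is the $\mathbb Z$-span of finitely many linearly independent vectors of $\mathbb Z^n$. The support of $\vec v\in\mathbb R^n$ is $\underline{\vec v}=\{i: v_i\neq 0\}$. A vector $\vec u\in L$ is elementary if $\vec u\in\{-1,0,+1\}^n\setminus\{\vec 0\}$ and $\vec u$ has minimal support among all vectors of $L\setminus\{\vec 0\}$ (i.e. no nonzero vector of $L$ has support strictly contained in $\underline{\vec u}$). The pair $(L,(\cdot,\cdot))$ is a zonotopal lattice if for every $\vec v\in L\setminus\{\vec 0\}$ there is an elementary vector $\vec u\in L$ with $\underline{\vec u}\subseteq\underline{\vec v}$. A vector $\vec v\in L\setminus\{\vec 0\}$ is a strict Voronoi vector if $\pm\vec v$ are the only vectors of minimal norm $(\vec w,\vec w)$ among all $\vec w$ in the coset $\vec v+2L$. *)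

(* Defs.v *)
From HB Require Import structures.
From mathcomp Require Import all_boot all_order all_algebra.
From mathcomp Require Import reals.
Set Implicit Arguments. Unset Strict Implicit. Unset Printing Implicit Defensive.
Import Order.TTheory GRing.Theory Num.Theory.
Local Open Scope ring_scope.

(* Vectors of Z^n are row vectors 'rV[int]_n.  A lattice L is given by a
   generator matrix B : 'M[int]_(m,n) whose m rows are linearly independent;
   L is the Z-span of the rows of B. *)
Definition lin_indep_rows (m n : nat) (B : 'M[int]_(m, n)) : Prop :=
  forall c : 'rV[int]_m, c *m B = 0 -> c = 0.

Definition inL (m n : nat) (B : 'M[int]_(m, n)) (v : 'rV[int]_n) : Prop :=
  exists c : 'rV[int]_m, v = c *m B.

Definition supp (n : nat) (v : 'rV[int]_n) : {set 'I_n} :=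
  [set i | v 0 i != 0].

(* The inner product on R^n for which the canonical basis is orthogonal,
   with (e_i, e_i) = w i > 0; restricted to integer vectors. *)
Definition ip (R : realType) (n : nat) (w : 'I_n -> R) (x y : 'rV[int]_n) : R :=
  \sum_(i < n) w i * ((x 0 i)%:~R * (y 0 i)%:~R).

Definition elementary (m n : nat) (B : 'M[int]_(m, n)) (u : 'rV[int]_n) : Prop :=
  [/\ inL B u,
      (forall i, u 0 i \in [:: -1; 0; 1]),
      u != 0 &
      ~ (exists x, [/\ inL B x, x != 0 & supp x \proper supp u])].

Definition zonotopal (m n : nat) (B : 'M[int]_(m, n)) : Prop :=
  forall v, inL B v -> v != 0 ->
    exists u, elementary B u /\ supp u \subset supp v.

(* v is a strict Voronoi vector: nonzero, in L, and +-v are the only vectors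
   of minimal norm in the coset v + 2L. *)
Definition strict_voronoi (R : realType) (m n : nat) (B : 'M[int]_(m, n))
    (w : 'I_n -> R) (v : 'rV[int]_n) : Prop :=
  [/\ inL B v, v != 0 &
      forall x, inL B x ->
        ip w v v <= ip w (v + 2%:~R *: x) (v + 2%:~R *: x) /\
        (ip w (v + 2%:~R *: x) (v + 2%:~R *: x) = ip w v v ->
           v + 2%:~R *: x = v \/ v + 2%:~R *: x = - v)].

(* Main.v *)
Require Import Defs.
From HB Require Import structures.
From mathcomp Require Import all_boot all_order all_algebra.
From mathcomp Require Import reals.
From mathcomp Require Import zify ring.
Import Order.TTheory GRing.Theory Num.Theory.
Local Open Scope ring_scope.

Lemma inLB {m n} {B : 'M[int]_(m, n)} (x y : 'rV[int]_n) (k : int) :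
  inL B x -> inL B y -> inL B (x - k *: y).
Proof. move=> [a ->] [b ->]; exists (a - k *: b); by rewrite mulmxBl scalemxAl. Qed.

Lemma inLN {m n} {B : 'M[int]_(m, n)} x : inL B x -> inL B (- x).
Proof. move=> [a ->]; exists (- a); by rewrite mulNmx. Qed.

Lemma entE {m n} {B : 'M[int]_(m, n)} {e} : elementary B e ->
  forall i, e 0 i = -1 \/ e 0 i = 0 \/ e 0 i = 1.
Proof.
case=> _ Hent _ _ i; move: (Hent i); rewrite !inE => /or3P [/eqP|/eqP|/eqP]; auto.
Qed.

Lemma elemN {m n} {B : 'M[int]_(m, n)} e : elementary B e -> elementary B (- e).
Proof.
move=> Ee; have E := entE Ee; case: Ee => He Hent Hnz Hmin.
have sN : supp (- e) = supp e by apply/setP => i; rewrite !inE mxE oppr_eq0.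
split.
- exact: inLN.
- by move=> i; rewrite mxE; case: (E i) => [->|[->|->]].
- by rewrite oppr_eq0.
- by rewrite sN.
Qed.

Definition conf {n} (z v : 'rV[int]_n) := forall i,
  z 0 i = 0 \/ (0 < z 0 i /\ 0 < v 0 i) \/ (z 0 i < 0 /\ v 0 i < 0).

Lemma stepA {m n} {B : 'M[int]_(m,n)} : zonotopal B ->
  forall k (v z : 'rV[int]_n), (#|supp z| < k)%N -> inL B z -> z != 0 ->
  conf z v -> exists e, elementary B e /\ conf e v.
Proof.
move=> Hz; elim=> [//|k IH] v z Hk Lz nz Cz.
have [e [Ee Hs]] := Hz z Lz nz.
have E := entE Ee.
case: (Ee) => Le Hent enz Hmin.
have suppE : forall i, e 0 i != 0 -> z 0 i != 0.
  by move=> i Hi; have := subsetP Hs i; rewrite !inE; apply.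
pose P i := ((0 < e 0 i) && (0 < z 0 i)) || ((e 0 i < 0) && (z 0 i < 0)).
pose Q i := ((0 < e 0 i) && (z 0 i < 0)) || ((e 0 i < 0) && (0 < z 0 i)).
case: (pickP Q) => [j Qj | noQ]; last first.
  exists e; split => // i; have := noQ i; have := Cz i; have := E i;
  have := suppE i; rewrite /Q; lia.
case: (pickP P) => [i0 Pi0 | noP]; last first.
  exists (- e); split; first exact: elemN.
  move=> i; rewrite mxE; have := noP i; have := Cz i; have := E i;
  have := suppE i; rewrite /P; move: (e 0 i) (z 0 i) (v 0 i) => a b c; lia.
case: (arg_minnP (fun i => absz (z 0 i)) Pi0) => i Pi Hmn.
pose z' := z - (z 0 i * e 0 i) *: e.
have z'E : forall j, z' 0 j = z 0 j - z 0 i * e 0 i * e 0 j.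
  by move=> j'; rewrite !mxE.
have coord : forall j, (z' 0 j = 0 \/ (0 < z' 0 j /\ 0 < z 0 j) \/
   (z' 0 j < 0 /\ z 0 j < 0)) /\ (z 0 j = 0 -> z' 0 j = 0)
   /\ (Q j -> z' 0 j != 0).
  move=> j'; rewrite z'E; have := Hmn j'; have := suppE j'; rewrite /P /Q.
  move: Pi; rewrite /P.
  case: (E i) => [->|[->|->]]; case: (E j') => [->|[->|->]]; lia.
apply: (IH v z').
- rewrite -ltnS; apply: leq_trans Hk; apply: proper_card; apply/properP; split.
    apply/subsetP => j2; rewrite !inE; have [_ [H _]] := coord j2.
    by apply: contra_neq => /H.
  exists i; rewrite !inE.
    by move: Pi; rewrite /P; lia.
  by rewrite z'E; move: Pi; rewrite /P; case: (E i) => [->|[->|->]]; lia.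
- exact: inLB.
- apply/eqP => H; have [_ [_ H2]] := coord j; move: (H2 Qj).
  by rewrite H mxE eqxx.
- move=> j2; have [H _] := coord j2; move: H; have := Cz j2.
  move: (z' 0 j2) (z 0 j2) (v 0 j2) => a b c; lia.
Qed.

Lemma ipD {R : realType} {n} (w : 'I_n -> R) (v x : 'rV[int]_n) :
  ip w (v + 2%:~R *: x) (v + 2%:~R *: x) =
  ip w v v + \sum_i w i * (4 * (x 0 i * (x 0 i + v 0 i)))%:~R.
Proof.
rewrite /ip -big_split /=; apply: eq_bigr => i _.
rewrite !mxE -mulrDr; congr (_ * _).
rewrite -!intrM -intrD intz; congr (_%:~R); ring.
Qed.

Theorem lemma2 (R : realType) (n m : nat) (B : 'M[int]_(m, n))
  (w : 'I_n -> R) :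
  (1 <= n)%N ->
  lin_indep_rows B ->
  (forall i, 0 < w i) ->
  zonotopal B ->
  forall v : 'rV[int]_n, inL B v ->
    (elementary B v <-> strict_voronoi B w v).
Proof.
move=> _ _ wpos Hz v Lv; split.
- move=> Ev; have vE := entE Ev; case: (Ev) => _ Hent vnz Hmin; split => // x Lx.
  have dge : forall i, 0 <= 4 * (x 0 i * (x 0 i + v 0 i)).
    by move=> i; case: (vE i) => [->|[->|->]]; nia.
  have sge : forall i : 'I_n, true -> 0 <= w i * (4 * (x 0 i * (x 0 i + v 0 i)))%:~R.
    by move=> i _; apply: mulr_ge0; [exact: ltW | rewrite ler0z].
  rewrite ipD; split.
    by rewrite lerDl; apply: sumr_ge0.
  move=> H.
  have H0 : \sum_i w i * (4 * (x 0 i * (x 0 i + v 0 i)))%:~R = 0.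
    by apply: (addrI (ip w v v)); rewrite addr0.
  have xi : forall i, x 0 i = 0 \/ x 0 i = - v 0 i.
    move=> i; have := @psumr_eq0P _ _ _ _ sge H0 i isT.
    move/eqP; rewrite mulf_eq0 (gt_eqF (wpos i)) /= intr_eq0 => /eqP Hi.
    have : x 0 i * (x 0 i + v 0 i) = 0 by lia.
    move/eqP; rewrite mulf_eq0 => /orP[/eqP|/eqP]; [left|right]; lia.
  have [->|xnz] := eqVneq x 0; first by left; rewrite scaler0 addr0.
  right.
  have xv : x = - v.
    apply/rowP => i; rewrite mxE.
    case: (xi i) => // Hx.
    case: (eqVneq (v 0 i) 0) => [Hv|Hv]; first by rewrite Hx Hv.
    exfalso; apply: Hmin; exists x; split => //; apply/properP; split.
      apply/subsetP => j; rewrite !inE; case: (xi j) => ->; first by rewrite eqxx.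
      by rewrite oppr_eq0.
    by exists i; rewrite !inE ?Hx ?eqxx.
  by apply/rowP => i; rewrite xv !mxE intz; move: (v 0 i) => a; lia.
- case=> _ vnz Hsv.
  have Cv : conf v v by move=> i; lia.
  have [e [Ee Ce]] := stepA Hz _ _ _ (ltnSn #|supp v|) Lv vnz Cv.
  have eE := entE Ee.
  case: (Ee) => Le Hent enz Hmin.
  have [Hev|nev] := eqVneq e v; first by rewrite -Hev.
  exfalso.
  have [Hge Heq] := Hsv (- e) (inLN _ Le).
  have Hle : ip w (v + 2%:~R *: - e) (v + 2%:~R *: - e) <= ip w v v.
    rewrite ipD gerDl; apply: sumr_le0 => i _; apply: mulr_ge0_le0.
      exact: ltW.
    rewrite lerz0 mxE; have := Ce i; case: (eE i) => [->|[->|->]]; lia.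
  have Heq2 : ip w (v + 2%:~R *: - e) (v + 2%:~R *: - e) = ip w v v.
    by apply: le_anti; rewrite Hle Hge.
  case: (Heq Heq2) => H.
  + move/eqP: enz; apply; apply/rowP => i.
    have := congr1 (fun M : 'rV[int]_n => M 0 i) H; rewrite /= !mxE ?intz; move: (v 0 i) (e 0 i) => a b; lia.
  + move/eqP: nev; apply; apply/rowP => i.
    have := congr1 (fun M : 'rV[int]_n => M 0 i) H; rewrite /= !mxE ?intz; move: (v 0 i) (e 0 i) => a b; lia.
Qed.
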